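(* Let $F$ be Thompson's group with standard generators $x_0,x_1$. Let $g\in F$ and let $H=\langle x_0,(x_0x_1)^g\rangle$, where $(x_0x_1)^g=g^{-1}x_0x_1g$. Then $\mathrm{Cl}(H)=F$.
   Context: Thompson's group $F$ is the group of all piecewise linear homeomorphisms of $[0,1]$ with finitely many breakpoints, all at finite dyadic fractions, and all slopes integer powers of $2$. Composition is from left to right ($fg$ means first $f$, then $g$), and $a^g=g^{-1}ag$. Writing points of $(0,1)$ as binary expansions $.s$, $x_0$ maps $.00\alpha\mapsto .0\alpha$, $.01\alpha\mapsto .10\alpha$, $.1\alpha\mapsto .11\alpha$, and $x_1$ maps $.0\alpha\mapsto .0\alpha$, $.100\alpha\mapsto .10\alpha$, $.101\alpha\mapsto .110\alpha$, $.11\alpha\mapsto .111\alpha$, for every infinite binary word $\alpha$. For a subgroup $H\le F$, the closure $\mathrm{Cl}(H)$ is the subgroup of $F$ consisting of all piecewise-$H$ functions, i.e. all $f\in F$ for which there is a finite subdivision of $[0,1]$ into subintervals such that on each subinterval $f$ coincides with some element of $H$ (equivalently, the topological full group of $H$ acting on the finite dyadic fractions of $[0,1]$). *)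

(* Defs.v *)
From mathcomp Require Import all_boot all_order all_algebra.
From mathcomp Require Import reals.
Set Implicit Arguments. Unset Strict Implicit. Unset Printing Implicit Defensive.
Import Order.TTheory GRing.Theory Num.Theory.
Local Open Scope ring_scope.

Section Thompson.
Variable R : realType.

Definition dyadic (x : R) : Prop := exists (m : int) (n : nat), x = m%:~R / 2 ^+ n.

Definition is_subdiv (bs : seq R) : Prop :=
  [/\ sorted <%R bs, head 1 bs = 0 & last 0 bs = 1].

Definition pieces (bs : seq R) : seq (R * R) := zip bs (behead bs).

(* Elements of F: maps R -> R, only their restriction to [0,1] matters.
   f is piecewise linear with dyadic breakpoints (contained in bs) and slopes
   integer powers of 2, with f 0 = 0 and f 1 = 1 (the pieces glue continuously
   since consecutive pieces share their endpoint). *)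
Definition inF (f : R -> R) : Prop :=
  f 0 = 0 /\ f 1 = 1 /\
  exists bs : seq R, is_subdiv bs /\ (forall x, x \in bs -> dyadic x) /\
    (forall a b, (a, b) \in pieces bs ->
       exists (k : int) (c : R), forall x, a <= x <= b -> f x = 2 ^ k * x + c).

Definition x0 (x : R) : R :=
  if x <= 1/4 then 2 * x
  else if x <= 1/2 then x + 1/4
  else x / 2 + 1/2.

Definition x1 (x : R) : R :=
  if x <= 1/2 then x
  else if x <= 5/8 then 2 * x - 1/2
  else if x <= 3/4 then x + 1/8
  else x / 2 + 1/2.

(* Composition is left to right: the product s h is "first s, then h",
   i.e. the map x |-> h (s x).  Elements are identified when they agree on [0,1]. *)
Inductive gen (S : (R -> R) -> Prop) : (R -> R) -> Prop :=
| gen_id : gen S id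
| gen_ext h h' : gen S h -> (forall x, 0 <= x <= 1 -> h' x = h x) -> gen S h'
| gen_mul s h : S s -> gen S h -> gen S (fun x => h (s x))
| gen_inv s t h : S s -> inF t -> (forall x, 0 <= x <= 1 -> t (s x) = x) ->
    gen S h -> gen S (fun x => h (t x)).

(* the generating set {x_0, (x_0 x_1)^g} with (x_0x_1)^g = g^-1 x_0 x_1 g:
   s is the conjugate iff s (g x) = g (x1 (x0 x)) for x in [0,1]
   (g is a bijection of [0,1], so this determines s on [0,1]). *)
Definition Hgens (g : R -> R) (s : R -> R) : Prop :=
  (forall x, 0 <= x <= 1 -> s x = x0 x) \/
  (forall x, 0 <= x <= 1 -> s (g x) = g (x1 (x0 x))).

Definition Cl (H : (R -> R) -> Prop) (f : R -> R) : Prop :=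
  inF f /\ exists bs : seq R, is_subdiv bs /\
    (forall a b, (a, b) \in pieces bs ->
       exists h, H h /\ forall x, a <= x <= b -> f x = h x).

End Thompson.

(* Main.v *)
Require Import Defs.
Set Warnings "-notation-overridden,-ambiguous-paths".
From mathcomp Require Import all_boot all_order all_algebra.
From mathcomp Require Import reals.
From mathcomp.algebra_tactics Require Import ring lra.
From mathcomp Require Import zify.
From Stdlib Require Import ClassicalEpsilon.
Set Implicit Arguments. Unset Strict Implicit. Unset Printing Implicit Defensive.
Import Order.TTheory GRing.Theory Num.Theory.
Local Open Scope ring_scope.

Fixpoint idx (w : seq bool) : nat :=
  if w is b :: w' then (b * 2 ^ size w' + idx w')%N else 0%N.

Lemma idx_lt w : (idx w < 2 ^ size w)%N.
Proof.
elim: w => [//|b w IH] /=; rewrite expnS.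
case: b => /=; lia.
Qed.

Lemma idx_cat u w : idx (u ++ w) = (idx u * 2 ^ size w + idx w)%N.
Proof.
elim: u => [//|b u IH] /=; rewrite IH size_cat expnD; case: b => /=; lia.
Qed.

Lemma word_ex n i : (i < 2 ^ n)%N -> exists u, size u = n /\ idx u = i.
Proof.
elim: n i => [|n IH] i hi.
  by exists [::]; split => //=; move: hi; rewrite expn0; lia.
rewrite expnS in hi.
case: (ltnP i (2 ^ n)) => h.
  have [u [su iu]] := IH i h; exists (false :: u); split => /=; [by rewrite su | by rewrite iu].
have h2 : (i - 2 ^ n < 2 ^ n)%N by lia.
have [u [su iu]] := IH _ h2; exists (true :: u); split => /=; first by rewrite su.
rewrite su iu; lia.
Qed.

Lemma idx_inj u v : size u = size v -> idx u = idx v -> u = v.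
Proof.
elim: u v => [|a u IH] [|b v] //= [] suv e.
have hu := idx_lt u; have hv := idx_lt v.
rewrite suv in e hu.
case: a b e => [] [] /= e.
- by rewrite (IH v suv) //; lia.
- lia.
- lia.
- by rewrite (IH v suv) //; lia.
Qed.

Lemma idx_nseq0 n : idx (nseq n false) = 0%N.
Proof. by elim: n. Qed.

Lemma idx_nseq1 n : idx (nseq n true) = (2 ^ n).-1.
Proof.
elim: n => [//|n IH] /=; rewrite size_nseq IH expnS.
have := expn_gt0 2 n; lia.
Qed.

Lemma idx0 u : idx u = 0%N -> true \notin u.
Proof.
elim: u => [//|b u IH] /=; rewrite in_cons; case: b => /=.
  have := expn_gt0 2 (size u); lia.
by move=> /IH.
Qed.

Lemma idx_max u : idx u = (2 ^ size u).-1 -> false \notin u.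
Proof.
elim: u => [//|b u IH] /=; rewrite in_cons expnS; have := idx_lt u; case: b => /= h.
  by move=> e; apply: IH; lia.
lia.
Qed.

Lemma nseq_of_notin b u : b \notin u -> u = nseq (size u) (~~ b).
Proof.
elim: u => [//|c u IH] /=; rewrite in_cons negb_or => /andP [h1 h2].
rewrite -IH //; congr (_ :: _); move: h1; by case: b c {IH h2} => [] [].
Qed.

Lemma ar1 a t r P : (0 < P)%N -> (r < P)%N -> (a * P * 2 <= (t * P + r) * 2 + 1)%N -> (a <= t)%N.
Proof.
move=> Pp rP h.
have : (a * P < t.+1 * P)%N by rewrite mulSn; lia.
by rewrite ltn_pmul2r // ltnS.
Qed.
Lemma ar2 a t r P : (0 < P)%N -> ((t * P + r) * 2 + 1 <= a.+1 * P * 2)%N -> (t <= a)%N.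
Proof.
move=> Pp h.
have : (t * P < a.+1 * P)%N by lia.
by rewrite ltn_pmul2r // ltnS.
Qed.
Section Reals.
Variable R : realType.

Definition lo (u : seq bool) : R := (idx u)%:R / 2 ^+ size u.
Definition hi (u : seq bool) : R := (idx u).+1%:R / 2 ^+ size u.
Definition A (u v : seq bool) (x : R) : R := lo v + (x - lo u) * (2 ^+ size u / 2 ^+ size v).
Definition I (u : seq bool) (x : R) := lo u <= x <= hi u.

Lemma two_pos n : 0 < (2:R) ^+ n.
Proof. by rewrite exprn_gt0. Qed.
Lemma two_neq0 n : (2:R) ^+ n != 0.
Proof. by rewrite gt_eqF // two_pos. Qed.

Ltac fld := field; rewrite ?two_neq0 ?andbT //.

Lemma lo_ge0 u : 0 <= lo u.
Proof. by rewrite /lo divr_ge0 // ltW // two_pos. Qed.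

Lemma natr_pow2 n : (2 ^ n)%:R = (2:R) ^+ n.
Proof. by rewrite natrX. Qed.

Lemma hi_le1 u : hi u <= 1.
Proof.
rewrite /hi ler_pdivrMr ?two_pos // mul1r -natr_pow2 ler_nat; exact: idx_lt.
Qed.

Lemma hi_lo u : hi u = lo u + 1 / 2 ^+ size u.
Proof. rewrite /hi /lo -natr1; have := two_neq0 (size u) => h; fld. Qed.

Lemma lo_lt_hi u : lo u < hi u.
Proof. by rewrite hi_lo ltrDl divr_gt0 ?two_pos. Qed.

Lemma lo_cat u w : lo (u ++ w) = lo u + lo w / 2 ^+ size u.
Proof.
rewrite /lo idx_cat size_cat natrD natrM natr_pow2 exprD.
have := two_neq0 (size u); have := two_neq0 (size w) => h1 h2; fld.
Qed.

Lemma A_cat u v w x : A (u ++ w) (v ++ w) x = A u v x.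
Proof.
rewrite /A !lo_cat !size_cat !exprD.
have := two_neq0 (size u); have := two_neq0 (size w); have := two_neq0 (size v) => h1 h2 h3; fld.
Qed.

Lemma I_cat u w x : I (u ++ w) x -> I u x.
Proof.
rewrite /I !hi_lo !lo_cat size_cat exprD => /andP [h1 h2].
have e0 : 0 <= lo w by apply: lo_ge0.
have e1 : lo w + 1 / 2 ^+ size w <= 1 by rewrite -hi_lo hi_le1.
have p1 := two_pos (size u); have p2 := two_pos (size w).
apply/andP; split.
  apply: le_trans h1; rewrite lerDl divr_ge0 // ltW //.
apply: (le_trans h2); rewrite -addrA lerD2l.
have -> : lo w / 2 ^+ size u + 1 / (2 ^+ size u * 2 ^+ size w) = (lo w + 1 / 2 ^+ size w) / 2 ^+ size u.
  fld.
by rewrite ler_pM2r ?invr_gt0.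
Qed.

Lemma A_lo u v : A u v (lo u) = lo v.
Proof. by rewrite /A subrr mul0r addr0. Qed.

Lemma A_hi u v : A u v (hi u) = hi v.
Proof.
rewrite /A hi_lo hi_lo addrAC subrr add0r.
have := two_neq0 (size u); have := two_neq0 (size v) => h1 h2; fld.
Qed.

Lemma A_comp u v z x : A v z (A u v x) = A u z x.
Proof.
rewrite /A; have := two_neq0 (size u); have := two_neq0 (size v);
  have := two_neq0 (size z) => h1 h2 h3; fld.
Qed.

Lemma A_id u x : A u u x = x.
Proof. by rewrite /A divff ?two_neq0 // mulr1 addrC subrK. Qed.

Lemma A_inv u v x : A v u (A u v x) = x.
Proof. by rewrite A_comp A_id. Qed.

Lemma sc_pos (u v : seq bool) : 0 < (2:R) ^+ size u / 2 ^+ size v.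
Proof. by rewrite divr_gt0 ?two_pos. Qed.

Lemma A_lt u v x y : x < y -> A u v x < A u v y.
Proof. by move=> h; rewrite /A ltrD2l ltr_pM2r ?sc_pos // ltrD2r. Qed.

Lemma A_le u v x y : x <= y -> A u v x <= A u v y.
Proof. by move=> h; rewrite /A lerD2l ler_pM2r ?sc_pos // lerD2r. Qed.

Lemma A_I u v x : I u x -> I v (A u v x).
Proof.
case/andP => h1 h2; apply/andP; split; first by rewrite -(A_lo u v) A_le.
by rewrite -(A_hi u v) A_le.
Qed.

Lemma I_01 u x : I u x -> 0 <= x <= 1.
Proof.
case/andP => h1 h2; apply/andP; split; first exact: le_trans (lo_ge0 u) h1.
exact: le_trans h2 (hi_le1 u).
Qed.

Definition in01 (x : R) := 0 <= x <= 1.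

Lemma I_in01 u x : I u x -> in01 x.
Proof. exact: I_01. Qed.

Section Gen.
Variable S : (R -> R) -> Prop.

Lemma gen_comp h1 h2 : gen S h1 -> gen S h2 -> gen S (fun x => h2 (h1 x)).
Proof.
move=> g1 g2; elim: g1.
- exact: gen_ext g2 _.
- move=> h h' _ IH e; apply: gen_ext IH _ => x hx /=; by rewrite e.
- move=> s h Ss _ IH; exact: gen_mul Ss IH.
- move=> s t h Ss Ft inv _ IH; exact: gen_inv Ss Ft inv IH.
Qed.

Lemma gen_gen s : S s -> gen S s.
Proof. move=> Ss; exact: (gen_mul Ss (gen_id S)). Qed.

Hypothesis hS : forall s, S s ->
  [/\ (forall x, in01 x -> in01 (s x)),
      (forall z, in01 z -> exists x, in01 x /\ s x = z) &
      exists si, gen S si /\ forall x, in01 x -> si (s x) = x].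

Lemma gen_linv h : gen S h -> exists h', gen S h' /\ forall x, in01 x -> h' (h x) = x.
Proof.
elim.
- by exists id; split => //; exact: gen_id.
- move=> h0 h1 _ [k [gk hk]] e; exists k; split => // x hx; by rewrite e // hk.
- move=> s h0 Ss _ [k [gk hk]].
  have [s01 _ [si [gsi hsi]]] := hS Ss.
  exists (fun z => si (k z)); split; first exact: gen_comp gk gsi.
  by move=> x hx /=; rewrite hk ?hsi // s01.
- move=> s t h0 Ss Ft hts _ [k [gk hk]].
  have [s01 ssurj _] := hS Ss.
  exists (fun z => s (k z)); split; first exact: gen_comp gk (gen_gen Ss).
  move=> x hx /=; have [z [hz <-]] := ssurj x hx.
  by rewrite hts // hk.
Qed.

Definition Real u v := exists h, gen S h /\ forall x, I u x -> h x = A u v x.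
Definition Q u v := exists D, forall w, (D <= size w)%N -> Real (u ++ w) (v ++ w).

Lemma Real_Q u v : Real u v -> Q u v.
Proof.
move=> [h [gh hh]]; exists 0%N => w _; exists h; split => // x hx.
by rewrite hh ?A_cat //; exact: I_cat hx.
Qed.

Lemma Q_refl u : Q u u.
Proof.
apply: Real_Q; exists id; split; first exact: gen_id.
by move=> x _; rewrite A_id.
Qed.

Lemma Q_ext u v w0 : Q u v -> Q (u ++ w0) (v ++ w0).
Proof.
move=> [D hD]; exists D => w hw; rewrite -!catA; apply: hD.
by rewrite size_cat; apply: leq_trans hw (leq_addl _ _).
Qed.

Lemma Q_trans u v z : Q u v -> Q v z -> Q u z.
Proof.
move=> [D1 h1] [D2 h2]; exists (maxn D1 D2) => w hw.
have [k1 [g1 e1]] := h1 w (leq_trans (leq_maxl _ _) hw).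
have [k2 [g2 e2]] := h2 w (leq_trans (leq_maxr _ _) hw).
exists (fun x => k2 (k1 x)); split; first exact: gen_comp g1 g2.
move=> x hx /=; rewrite e1 // e2 ?A_comp //; exact: A_I.
Qed.

Lemma Q_sym u v : Q u v -> Q v u.
Proof.
move=> [D h]; exists D => w hw.
have [k [gk ek]] := h w hw.
have [k' [gk' ek']] := gen_linv gk.
exists k'; split => // x hx.
set y := A (v ++ w) (u ++ w) x.
have hy : I (u ++ w) y by exact: A_I.
have -> : x = k y by rewrite ek // A_inv.
by rewrite ek'; last exact: I_in01 hy.
Qed.

Section Reduction.
Hypothesis b00 : Q [:: false; false] [:: false].
Hypothesis b01 : Q [:: false; true] [:: true; false].
Hypothesis b1 : Q [:: true] [:: true; true].
Hypothesis bX1 : Q [:: false; true; false] [:: true; false].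
Hypothesis bX2 : Q [:: false; true; true] [:: true; true; false].

Lemma base100 : Q [:: true; false; false] [:: true; false].
Proof. apply: Q_trans bX1; apply: Q_sym; exact: (Q_ext [:: false] b01). Qed.

Lemma base101 : Q [:: true; false; true] [:: true; false].
Proof.
apply: (Q_trans (v := [:: true; true; false])).
  apply: Q_trans bX2; apply: Q_sym; exact: (Q_ext [:: true] b01).
apply: Q_sym; exact: (Q_ext [:: false] b1).
Qed.

Lemma interior u : true \in u -> false \in u -> Q u [:: false; true].
Proof.
have [n] := ubnP (size u); elim: n u => [//|n IH] u hn ht hf.
have case10 : forall r, ((size r).+1 < n)%N -> Q (true :: false :: r) [:: false; true].
  move=> [|c r'] hr.
    by apply: Q_sym.
  case: c hr => hr.
    apply: Q_trans (Q_ext r' base101) _; apply: IH; rewrite /= ?inE ?eqxx ?orbT //; try (by move: ht; rewrite !inE); by move: hf; rewrite !inE.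
  apply: Q_trans (Q_ext r' base100) _; apply: IH; rewrite /= ?inE ?eqxx ?orbT //; try (by move: ht; rewrite !inE); by move: hf; rewrite !inE.
case: u hn ht hf => [//|b1' [|b2 r]] /=.
  by case: b1' => _; rewrite !inE.
move=> hn ht hf.
case: b1' b2 hn ht hf => [] [] hn ht hf.
- apply: Q_trans (Q_sym (Q_ext r b1)) _; apply: IH; rewrite /= ?inE ?eqxx ?orbT //; try (by move: ht; rewrite !inE); by move: hf; rewrite !inE.
- by apply: case10.
- apply: Q_trans (Q_ext r b01) _; exact: case10.
- apply: Q_trans (Q_ext r b00) _; apply: IH; rewrite /= ?inE ?eqxx ?orbT //; try (by move: ht; rewrite !inE); by move: hf; rewrite !inE.
Qed.

Lemma zeros n : Q (false :: nseq n false) [:: false].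
Proof.
elim: n => [|n IH]; first exact: Q_refl.
exact: Q_trans (Q_ext (nseq n false) b00) IH.
Qed.

Lemma ones n : Q (true :: nseq n true) [:: true].
Proof.
elim: n => [|n IH]; first exact: Q_refl.
exact: Q_trans (Q_sym (Q_ext (nseq n true) b1)) IH.
Qed.

End Reduction.
End Gen.
Definition on u (f : R -> R) v := forall x, I u x -> f x = A u v x.
Definition CW N (f : R -> R) := forall u, size u = N -> exists v, on u f v.

Lemma on_cat u v w f : on u f v -> on (u ++ w) f (v ++ w).
Proof. move=> h x hx; rewrite A_cat; apply: h; exact: I_cat hx. Qed.

Lemma CW_mono N d f : CW N f -> CW (N + d) f.
Proof.
move=> h u su.
have st : size (take N u) = N by rewrite size_takel // su leq_addr.
have [v hv] := h _ st; exists (v ++ drop N u).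
by rewrite -{1}(cat_take_drop N u); exact: on_cat.
Qed.

Lemma CW_comp N M k f : CW N k -> CW M f -> CW (N + M) (fun x => f (k x)).
Proof.
move=> hk hf u su.
have s1 : size (take N u) = N by rewrite size_takel // su leq_addr.
have [v1 h1] := hk _ s1.
set w := v1 ++ drop N u.
have sw : (M <= size w)%N by rewrite size_cat size_drop su addKn leq_addl.
have s2 : size (take M w) = M by rewrite size_takel.
have [z h2] := hf _ s2.
exists (z ++ drop M w) => x hx.
have hx1 : on u k w by rewrite /w -{1}(cat_take_drop N u); exact: on_cat.
have hw : on w f (z ++ drop M w).
  by have := on_cat (w := drop M w) h2; rewrite cat_take_drop.
rewrite /= hx1 // hw ?A_comp //; exact: A_I.
Qed.

Definition incr a b (f : R -> R) := forall x y, a <= x -> x < y -> y <= b -> f x < f y.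

Lemma incr_glue a b c f : incr a b f -> incr b c f -> incr a c f.
Proof.
move=> h1 h2 x y ax xy yc.
case: (leP y b) => yb; first exact: h1.
case: (leP b x) => bx; first exact: h2.
apply: (@lt_trans _ _ (f b)); [exact: h1 | exact: h2].
Qed.

Lemma incr_le a b f x y : incr a b f -> a <= x -> x <= y -> y <= b -> f x <= f y.
Proof.
move=> h ax; rewrite le_eqVlt => /orP [/eqP -> //|xy] yb.
by apply: ltW; apply: h.
Qed.

Lemma I_lo u : I u (lo u).
Proof. by rewrite /I lexx ltW // lo_lt_hi. Qed.
Lemma I_hi u : I u (hi u).
Proof. by rewrite /I lexx ltW // lo_lt_hi. Qed.

Lemma on_incr u f v : on u f v -> incr (lo u) (hi u) f.
Proof.
move=> h x y lx xy yh.
have hx : I u x by rewrite /I lx (le_trans (ltW xy) yh).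
have hy : I u y by rewrite /I yh (le_trans lx (ltW xy)).
by rewrite !h //; apply: A_lt.
Qed.

Definition gp N (k : nat) : R := k%:R / 2 ^+ N.

Lemma gp0 N : gp N 0 = 0.
Proof. by rewrite /gp mul0r. Qed.

Lemma gp_top N : gp N (2 ^ N) = 1.
Proof. by rewrite /gp natr_pow2 divff // two_neq0. Qed.

Lemma word_cell N k : (k < 2 ^ N)%N -> exists u, [/\ size u = N, lo u = gp N k & hi u = gp N k.+1].
Proof.
move=> hk; have [u [su iu]] := word_ex hk; exists u.
by rewrite /lo /hi /gp su iu.
Qed.

Lemma cells_incr N f : (forall u, size u = N -> incr (lo u) (hi u) f) -> incr 0 1 f.
Proof.
move=> hf.
have key : forall k, (k <= 2 ^ N)%N -> incr 0 (gp N k) f.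
  elim=> [|k IH] hk.
    by rewrite gp0 => x y h0 xy y0; exfalso; have := le_lt_trans h0 xy; rewrite ltNge y0.
  have [u [su lu hu]] := word_cell hk.
  apply: incr_glue (IH (ltnW hk)) _.
  by rewrite -lu -hu; exact: hf.
by rewrite -(gp_top N); apply: key.
Qed.

Lemma CW_incr N f : CW N f -> incr 0 1 f.
Proof.
move=> hf; apply: (cells_incr (N := N)) => u su.
have [v hv] := hf u su; exact: on_incr hv.
Qed.

Lemma cell_find N x : in01 x -> exists u, size u = N /\ I u x.
Proof.
move=> /andP [x0 x1].
have key : forall k, (k < 2 ^ N)%N -> x <= gp N k.+1 -> exists u, size u = N /\ I u x.
  elim=> [|k IH] hk hx.
    have [u [su lu hu]] := word_cell hk.
    by exists u; rewrite /I lu hu gp0 x0 hx.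
  case: (leP x (gp N k.+1)) => h; first exact: IH (ltnW hk) h.
  have [u [su lu hu]] := word_cell hk.
  by exists u; rewrite /I lu hu hx ltW.
apply: (key (2 ^ N).-1); first by rewrite prednK ?expn_gt0 // ltnSn.
by rewrite prednK ?expn_gt0 // gp_top.
Qed.

Lemma on_surj u f v z : on u f v -> f (lo u) <= z <= f (hi u) -> exists x, I u x /\ f x = z.
Proof.
move=> h; rewrite !h ?I_lo ?I_hi // A_lo A_hi => hz.
exists (A v u z); split; first exact: A_I.
by rewrite h ?A_inv //; apply: A_I.
Qed.

Lemma CW_surj N f z : CW N f -> f 0 <= z <= f 1 -> exists x, in01 x /\ f x = z.
Proof.
move=> hf /andP [z0 z1].
have key : forall k, (k < 2 ^ N)%N -> z <= f (gp N k.+1) ->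
    exists x, (0 <= x <= gp N k.+1) /\ f x = z.
  elim=> [|k IH] hk hz.
    have [u [su lu hu]] := word_cell hk.
    have [v hv] := hf u su.
    have [x [hx fx]] : exists x, I u x /\ f x = z.
      by apply: on_surj hv _; rewrite lu hu gp0 z0 hz.
    by exists x; split => //; move: hx; rewrite /I lu hu gp0.
  case: (leP z (f (gp N k.+1))) => h.
    have [x [/andP [h1 h2] fx]] := IH (ltnW hk) h.
    exists x; split => //; rewrite h1 /=; apply: (le_trans h2).
    by rewrite /gp ler_pM2r ?invr_gt0 ?two_pos // ler_nat.
  have [u [su lu hu]] := word_cell hk.
  have [v hv] := hf u su.
  have [x [hx fx]] : exists x, I u x /\ f x = z.
    by apply: on_surj hv _; rewrite lu hu hz ltW.
  exists x; split => //; move: hx; rewrite /I lu hu => /andP [h1 ->]; rewrite andbT.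
  by apply: le_trans h1; rewrite /gp divr_ge0 // ltW // two_pos.
have [x [/andP [h1 h2] fx]] : exists x, (0 <= x <= gp N (2 ^ N).-1.+1) /\ f x = z.
  apply: key; first by rewrite prednK ?expn_gt0 // ltnSn.
  by rewrite prednK ?expn_gt0 // gp_top.
by exists x; split => //; rewrite /in01 h1; rewrite prednK ?expn_gt0 // gp_top in h2.
Qed.

Lemma frac_le a b p q : (a%:R / 2 ^+ p <= b%:R / 2 ^+ q :> R) = (a * 2 ^ q <= b * 2 ^ p)%N.
Proof.
by rewrite ler_pdivlMr ?two_pos // mulrAC ler_pdivrMr ?two_pos // -!natr_pow2 -!natrM ler_nat.
Qed.

Lemma lo_mid w : lo (w ++ [:: true]) = (idx w * 2 + 1)%:R / 2 ^+ (size w).+1.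
Proof. by rewrite /lo idx_cat size_cat /= addn1 expn1 expn0 mul1n addn0. Qed.

Lemma prefix_mid v w : I v (lo (w ++ [:: true])) -> (size v <= size w)%N -> v = take (size v) w.
Proof.
rewrite /I lo_mid /lo /hi !frac_le => /andP [h1 h2] hs.
set d := (size w - size v)%N.
have e : w = take (size v) w ++ drop (size v) w by rewrite cat_take_drop.
have st : size (take (size v) w) = size v by rewrite size_takel.
have sd : size (drop (size v) w) = d by rewrite size_drop.
have ir := idx_lt (drop (size v) w); rewrite sd in ir.
have iw : idx w = (idx (take (size v) w) * 2 ^ d + idx (drop (size v) w))%N.
  by rewrite {1}e idx_cat sd.
have ep : (2 ^ (size w).+1 = 2 ^ d * 2 * 2 ^ size v)%N.
  by rewrite expnS -(subnK hs) expnD -/d mulnCA mulnA.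
apply: idx_inj; first by rewrite st.
move: h1 h2; rewrite ep iw !mulnA.
have Qp : (0 < 2 ^ size v)%N by rewrite expn_gt0.
have Pp : (0 < 2 ^ d)%N by rewrite expn_gt0.
rewrite !leq_pmul2r // => h1 h2.
by apply/eqP; rewrite eqn_leq (ar2 Pp h2) (ar1 Pp ir h1).
Qed.
Lemma words_bound (P : seq bool -> nat -> Prop) N :
  (forall u, size u = N -> exists m, P u m) ->
  exists M, forall u, size u = N -> exists m, (m <= M)%N /\ P u m.
Proof.
elim: N P => [|N IH] P h.
  have [m hm] := h [::] erefl.
  by exists m => u /size0nil ->; exists m.
have [M0 h0] := IH (fun u m => P (false :: u) m) (fun u su => h (false :: u) (f_equal S su)).
have [M1 h1] := IH (fun u m => P (true :: u) m) (fun u su => h (true :: u) (f_equal S su)).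
exists (maxn M0 M1) => [[//|[] u]] /= [su].
  have [m [hm pm]] := h1 u su; exists m; split => //; exact: leq_trans hm (leq_maxr _ _).
have [m [hm pm]] := h0 u su; exists m; split => //; exact: leq_trans hm (leq_maxl _ _).
Qed.

Lemma CW_inv N f : CW N f -> f 0 = 0 -> f 1 = 1 ->
  exists fi, [/\ forall x, in01 x -> in01 (f x) /\ fi (f x) = x,
                 forall z, in01 z -> in01 (fi z) /\ f (fi z) = z &
                 exists M, CW M fi].
Proof.
move=> hf f0 f1.
have inc := CW_incr hf.
have f01 : forall x, in01 x -> in01 (f x).
  move=> x /andP [x0 x1]; apply/andP; split.
    by rewrite -f0; apply: (incr_le inc) => //; rewrite lexx.
  by rewrite -f1; apply: (incr_le inc) => //; rewrite lexx.
have inj : forall x y, in01 x -> in01 y -> f x = f y -> x = y.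
  move=> x y /andP [x0 x1] /andP [y0 y1] e.
  case: (ltgtP x y) => // h.
    by have := inc x y x0 h y1; rewrite e ltxx.
  by have := inc y x y0 h x1; rewrite e ltxx.
pose fi z := epsilon (inhabits (0:R)) (fun x => in01 x /\ f x = z).
have fiP : forall z, in01 z -> in01 (fi z) /\ f (fi z) = z.
  move=> z hz; apply: (epsilon_spec (inhabits (0:R)) (fun x => in01 x /\ f x = z)).
  by apply: CW_surj hf _; rewrite f0 f1.
have fif : forall x, in01 x -> fi (f x) = x.
  move=> x hx; have [h1 h2] := fiP _ (f01 x hx); exact: inj.
exists fi; split => //; first by move=> x hx; split; [exact: f01 | exact: fif].
have [M hM] : exists M, forall u, size u = N -> exists m, (m <= M)%N /\ exists v, size v = m /\ on u f v.
  apply: (words_bound (P := fun u m => exists v, size v = m /\ on u f v)) => u su.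
  by have [v hv] := hf u su; exists (size v), v.
exists M => w sw.
set z := lo (w ++ [:: true]).
have zw : I w z by apply: (I_cat (w := [:: true])); exact: I_lo.
have [hx fx] := fiP z (I_in01 zw).
have [u [su hu]] := cell_find N hx.
have [m [mM [v [sv hv]]]] := hM u su.
have zv : I v z by rewrite -fx hv //; exact: A_I.
have pv := prefix_mid zv (ltac:(by rewrite sv sw)).
exists (u ++ drop (size v) w) => z' hz'.
have ew : w = v ++ drop (size v) w by rewrite {1}pv cat_take_drop.
rewrite ew in hz'.
have hz'v : I v z' := I_cat hz'.
have hx' : I u (A v u z') by exact: A_I.
have e1 : f (A v u z') = z' by rewrite hv // A_inv.
have -> : A w (u ++ drop (size v) w) z' = A v u z' by rewrite {1}ew A_cat.
by rewrite -{1}e1 fif //; exact: I_in01 hx'.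
Qed.

Lemma natz_R n : (n%:R : R) = (n%:Z)%:~R.
Proof. exact: pmulrn. Qed.

Lemma exprz_ratio (a b : nat) : exists k : int, (2:R) ^ k = 2 ^+ a / 2 ^+ b.
Proof.
case: (leqP b a) => h.
  exists (Posz (a - b)); rewrite -[in RHS](subnK h) exprD mulfK ?two_neq0 //.
exists (Negz (b - a).-1).
have -> : (2:R) ^ (Negz (b - a).-1) = (2 ^+ (b - a).-1.+1)^-1 by [].
rewrite prednK ?subn_gt0 // -[in RHS](subnK (ltnW h)) exprD.
have := two_neq0 (b - a); have := two_neq0 a => h1 h2; fld.
Qed.

Definition gl N : seq R := [seq gp N i | i <- iota 0 (2 ^ N).+1].

Lemma zip_iota (f : nat -> R) m n :
  zip (map f (iota m n.+1)) (behead (map f (iota m n.+1))) = [seq (f i, f i.+1) | i <- iota m n].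
Proof. by elim: n m => [//|n IH] m /=; rewrite -IH. Qed.

Lemma last_iota (f : nat -> R) x0 m n : last x0 (map f (iota m n.+1)) = f (m + n)%N.
Proof.
elim: n m x0 => [|n IH] m x0; first by rewrite /= addn0.
by rewrite (_ : iota m n.+2 = m :: iota m.+1 n.+1) // map_cons last_cons IH addSnnS.
Qed.

Lemma gp_lt N i j : (i < j)%N -> gp N i < gp N j.
Proof. by move=> h; rewrite /gp ltr_pM2r ?invr_gt0 ?two_pos // ltr_nat. Qed.

Lemma gl_subdiv N : is_subdiv (gl N).
Proof.
split.
- rewrite /gl; apply: (homo_sorted (e := ltn)); last exact: iota_ltn_sorted.
  by move=> i j; apply: gp_lt.
- by rewrite /gl /= gp0.
- by rewrite /gl last_iota add0n gp_top.
Qed.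

Lemma gl_dyadic N x : x \in gl N -> dyadic x.
Proof. by case/mapP => i _ ->; exists (Posz i), N; rewrite /gp natz_R. Qed.

Lemma gl_pieces N a b : (a, b) \in pieces (gl N) ->
  exists i, [/\ (i < 2 ^ N)%N, a = gp N i & b = gp N i.+1].
Proof.
rewrite /pieces /gl zip_iota => /mapP [i]; rewrite mem_iota add0n => /andP [_ hi] [-> ->].
by exists i.
Qed.

Lemma CW_inF N f : CW N f -> f 0 = 0 -> f 1 = 1 -> inF f.
Proof.
move=> hf f0 f1; split => //; split => //.
exists (gl N); split; first exact: gl_subdiv.
split; first exact: gl_dyadic.
move=> a b /gl_pieces [i [hi -> ->]].
have [u [su lu hu]] := word_cell hi.
have [v hv] := hf u su.
have [k hk] := exprz_ratio N (size v).
exists k, (lo v - lo u * (2 ^+ N / 2 ^+ size v)) => x hx.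
rewrite hv; last by rewrite /I lu hu.
by rewrite /A hk su; ring.
Qed.

Definition gz n (x : R) := exists m : int, x = m%:~R / 2 ^+ n.

Lemma gz_mono n d x : gz n x -> gz (n + d) x.
Proof.
move=> [m ->]; exists (m * (2 ^ d)%N%:Z).
rewrite intrM -natz_R natr_pow2 exprD.
have := two_neq0 n; have := two_neq0 d => h1 h2; fld.
Qed.

Lemma gz_le n d x : (n <= d)%N -> gz n x -> gz d x.
Proof. by move=> h /(gz_mono (d - n)); rewrite subnKC. Qed.

Lemma dyadic_gz (x : R) : dyadic x -> exists n, gz n x.
Proof. by move=> [m [n ->]]; exists n, m. Qed.

Lemma gz_dyadic n (x : R) : gz n x -> dyadic x.
Proof. by move=> [m ->]; exists m, n. Qed.

Lemma dyadic2 (x y : R) : dyadic x -> dyadic y -> exists n, gz n x /\ gz n y.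
Proof.
move=> /dyadic_gz [n1 h1] /dyadic_gz [n2 h2]; exists (n1 + n2)%N; split.
  exact: gz_mono.
by rewrite addnC; exact: gz_mono.
Qed.

Lemma dyadicD (x y : R) : dyadic x -> dyadic y -> dyadic (x + y).
Proof.
move=> hx hy; have [n [[m1 e1] [m2 e2]]] := dyadic2 hx hy.
by exists (m1 + m2), n; rewrite e1 e2 intrD mulrDl.
Qed.

Lemma dyadicB (x y : R) : dyadic x -> dyadic y -> dyadic (x - y).
Proof.
move=> hx hy; have [n [[m1 e1] [m2 e2]]] := dyadic2 hx hy.
by exists (m1 - m2), n; rewrite e1 e2 intrB mulrBl.
Qed.

Lemma dyadicM2 (p q : nat) (x : R) : dyadic x -> dyadic (2 ^+ p / 2 ^+ q * x).
Proof.
move=> [m [n ->]]; exists (m * (2 ^ p)%N%:Z), (n + q)%N.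
rewrite intrM -natz_R natr_pow2 exprD.
have := two_neq0 n; have := two_neq0 q => h1 h2; fld.
Qed.

Lemma exprz_split (k : int) : exists p q : nat, (2:R) ^ k = 2 ^+ p / 2 ^+ q.
Proof.
case: k => [p|n]; first by exists p, 0%N; rewrite expr0 divr1.
by exists 0%N, n.+1; rewrite expr0 div1r.
Qed.

Lemma chain f (s : seq R) a :
  sorted <%R (a :: s) ->
  (forall x, x \in a :: s -> dyadic x) ->
  (forall p q, (p, q) \in zip (a :: s) s ->
     exists (k : int) (c : R), forall x, p <= x <= q -> f x = 2 ^ k * x + c) ->
  dyadic (f a) -> forall x, x \in a :: s -> dyadic (f x).
Proof.
elim: s a => [|b s IH] a hs hd hp hfa x.
  by rewrite inE => /eqP ->.
rewrite inE => /orP [/eqP -> //|hx].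
have ab : a < b by move: hs => /= /andP [].
have hab : (a, b) \in zip (a :: b :: s) (b :: s) by rewrite /= inE eqxx.
have [k [c hk]] := hp a b hab.
have hfb : dyadic (f b).
  have [p [q hpq]] := exprz_split k.
  have -> : f b = f a + 2 ^+ p / 2 ^+ q * (b - a).
    by rewrite hk ?lexx ?(ltW ab) // hk ?lexx ?(ltW ab) // hpq; ring.
  apply: dyadicD hfa (dyadicM2 _ _ (dyadicB (hd b _) (hd a _))).
    by rewrite !inE eqxx orbT.
  by rewrite inE eqxx.
apply: IH hx => //.
- by move: hs => /= /andP [].
- by move=> y hy; apply: hd; rewrite inE hy orbT.
- by move=> p q hpq; apply: hp; rewrite /= inE hpq orbT.
Qed.

Definition goodP (f : R -> R) N (ab : R * R) :=
  [/\ gz N ab.1, gz N ab.2 & exists p q : nat, [/\ (p <= N)%N, gz (N + q - p) (f ab.1) &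
     forall x, ab.1 <= x <= ab.2 -> f x = f ab.1 + (x - ab.1) * (2 ^+ p / 2 ^+ q)]].

Lemma list_bound (T : eqType) (s : seq T) (P : T -> nat -> Prop) :
  (forall z, z \in s -> exists N0, forall N, (N0 <= N)%N -> P z N) ->
  exists N0, forall z, z \in s -> forall N, (N0 <= N)%N -> P z N.
Proof.
elim: s => [|y s IH] h; first by exists 0%N.
have [N1 h1] := h y (mem_head _ _).
have [N2 h2] := IH (fun z hz => h z (mem_behead (s := y :: s) hz)).
exists (maxn N1 N2) => z; rewrite inE => /orP [/eqP -> | hz] N hN.
  by apply: h1; apply: leq_trans hN; apply: leq_maxl.
by apply: h2 => //; apply: leq_trans hN; apply: leq_maxr.
Qed.

Lemma in_zip (T1 T2 : eqType) (s : seq T1) (t : seq T2) a b :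
  (a, b) \in zip s t -> a \in s /\ b \in t.
Proof.
elim: s t => [|x s IH] [|y t] //=; rewrite inE => /orP [/eqP [-> ->]|/IH [h1 h2]].
  by rewrite !inE !eqxx.
by rewrite !inE h1 h2 !orbT.
Qed.

Lemma zip_sorted (s : seq R) x a b :
  sorted <%R (x :: s) -> (a, b) \in zip (x :: s) s -> a < b.
Proof.
elim: s x => [//|y s IH] x /= /andP [xy hs]; rewrite inE => /orP [/eqP [-> ->] //|h].
exact: IH hs h.
Qed.

Lemma gz_cell u b : gz (size u) b -> b < hi u -> b <= lo u.
Proof.
move=> [m ->]; rewrite /hi /lo ltr_pM2r ?invr_gt0 ?two_pos // ler_pM2r ?invr_gt0 ?two_pos //.
by rewrite !natz_R ltr_int ler_int => h; lia.
Qed.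

Lemma cell_piece (s : seq R) a u :
  sorted <%R (a :: s) -> (forall x, x \in a :: s -> gz (size u) x) ->
  a <= lo u -> hi u <= last a s ->
  exists p q, [/\ (p, q) \in zip (a :: s) s, p <= lo u & hi u <= q].
Proof.
elim: s a => [|b s IH] a hs hg hal hul.
  by exfalso; have := lt_le_trans (lo_lt_hi u) hul; rewrite ltNge hal.
case: (leP (hi u) b) => hb.
  by exists a, b; split => //; rewrite /= inE eqxx.
have bl : b <= lo u by apply: gz_cell hb; apply: hg; rewrite !inE eqxx orbT.
have [p [q [h1 h2 h3]]] := IH b (path_sorted hs)
  (fun x hx => hg x (mem_behead (s := a :: b :: s) hx)) bl hul.
by exists p, q; split => //; rewrite /= inE h1 orbT.
Qed.

Lemma inF_CW f : inF f -> exists N, CW N f.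
Proof.
move=> [f0 [f1 [bs [[hs hh hl] [hd hp]]]]].
case: bs hs hh hl hd hp => [|a s] hs hh hl hd hp.
  by move: hh => /= /eqP; rewrite oner_eq0.
simpl in hh, hl; subst a.
have hfa : dyadic (f 0) by rewrite f0; exists 0, 0%N; rewrite mul0r.
have hfd := chain hs hd hp hfa.
have [N1 hN1] := list_bound (s := 0 :: s) (P := fun x N => gz N x)
  (fun x hx => let: ex_intro n hn := dyadic_gz (hd x hx) in
     ex_intro _ n (fun N hN => gz_le hN hn)).
have [N2 hN2] : exists N0, forall z, z \in zip (0 :: s) s -> forall N, (N0 <= N)%N -> goodP f N z.
  apply: list_bound => [[a b]] hab.
  have ha : a \in 0 :: s by have [] := in_zip hab.
  have hb : b \in 0 :: s by have [_ h] := in_zip hab; apply: (mem_behead (s := 0 :: s)).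
  have [k [c hk]] := hp a b hab.
  have ab : a <= b by apply: ltW; exact: zip_sorted hs hab.
  have [p [q hpq]] := exprz_split k.
  have [na gna] := dyadic_gz (hd a ha).
  have [nb gnb] := dyadic_gz (hd b hb).
  have [nf gnf] := dyadic_gz (hfd a ha).
  exists (na + nb + nf + p)%N => N hN; split => /=.
  - by apply: gz_le gna; lia.
  - by apply: gz_le gnb; lia.
  exists p, q; split; first by lia.
    by apply: gz_le gnf; lia.
  by move=> x hx; rewrite hk // hk ?lexx ?ab // hpq; ring.
set N := maxn N1 N2.
have ph1 : forall u, size u = N -> exists (J : int) (M : nat),
    forall x, I u x -> f x = J%:~R / 2 ^+ M + (x - lo u) * (2 ^+ N / 2 ^+ M).
  move=> u su.
  have [p0 [q0 [hpq hpl hqu]]] : exists p q, [/\ (p, q) \in zip (0 :: s) s, p <= lo u & hi u <= q].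
    apply: cell_piece hs _ (lo_ge0 u) _; last by rewrite hl hi_le1.
    by move=> x hx; rewrite su; apply: hN1 => //; apply: leq_maxl.
  have [ga gb [p [q [pN gfa hfx]]]] := hN2 _ hpq N (leq_maxr _ _).
  simpl in ga, gb, gfa, hfx.
  have [ia eia] := ga; have [m em] := gfa.
  set M := (N + q - p)%N.
  have hs2 : (2:R) ^+ p / 2 ^+ q = 2 ^+ N / 2 ^+ M.
    rewrite /M -(subnK pN) -addnBAC ?leq_addl // addnK !exprD.
    have := two_neq0 p; have := two_neq0 q; have := two_neq0 (N - p) => h1 h2 h3; fld.
  exists (m + (idx u)%:Z - ia), M => x hx.
  have hx' : p0 <= x <= q0.
    by case/andP: hx => h1 h2; rewrite (le_trans hpl h1) (le_trans h2 hqu).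
  rewrite hfx // hs2 em eia /lo su !intrD intrN -natz_R.
  have := two_neq0 N; have := two_neq0 M => h1 h2; fld.
have inc : incr 0 1 f.
  apply: (cells_incr (N := N)) => u su.
  have [J [M hJ]] := ph1 u su.
  move=> x y lx xy yh.
  have hx : I u x by rewrite /I lx (le_trans (ltW xy) yh).
  have hy : I u y by rewrite /I yh (le_trans lx (ltW xy)).
  by rewrite !hJ // ltrD2l ltr_pM2r ?divr_gt0 ?two_pos // ltrD2r.
exists N => u su.
have [J [M hJ]] := ph1 u su.
have hlo : f (lo u) = J%:~R / 2 ^+ M by rewrite hJ ?I_lo // subrr mul0r addr0.
have hhi : f (hi u) = (J + 1)%:~R / 2 ^+ M.
  rewrite hJ ?I_hi // hi_lo su intrD addrAC subrr add0r.
  have := two_neq0 N; have := two_neq0 M => h1 h2; fld.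
have u01 := I_in01 (I_lo u); have u01' := I_in01 (I_hi u).
have J0 : 0 <= J.
  have : f 0 <= f (lo u) by case/andP: u01 => a1 a2; apply: (incr_le inc); rewrite ?lexx.
  by rewrite f0 hlo ler_pdivlMr ?two_pos // mul0r ler0z.
have J1 : J + 1 <= (2 ^ M)%N%:Z.
  have : f (hi u) <= f 1 by case/andP: u01' => a1 a2; apply: (incr_le inc); rewrite ?lexx.
  by rewrite f1 hhi ler_pdivrMr ?two_pos // mul1r -natr_pow2 natz_R ler_int.
case: J J0 J1 hJ {hlo hhi} => [j|//] _ J1 hJ.
have hj : (j < 2 ^ M)%N by move: J1; lia.
have [v [sv iv]] := word_ex hj.
exists v => x hx.
by rewrite hJ // /A /lo sv iv su natz_R.
Qed.

Ltac splitif := repeat (match goal with |- context [if ?a <= ?b then _ else _] =>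
   lazymatch a with context [if _ then _ else _] => fail | _ => case: (leP a b) => ? end end; cbv beta iota).

Definition X (x : R) : R := x1 (x0 x).

Lemma on_num u f (a b c d : nat) : idx u = a -> size u = b -> (c < 2 ^ d)%N ->
  (forall x, a%:R / 2 ^+ b <= x <= a.+1%:R / 2 ^+ b ->
     f x = c%:R / 2 ^+ d + (x - a%:R / 2 ^+ b) * (2 ^+ b / 2 ^+ d)) ->
  exists v, on u f v.
Proof.
move=> iu su hc h; have [v [sv iv]] := word_ex hc; exists v => x.
by rewrite /I /A /lo /hi iu su sv iv; apply: h.
Qed.

Ltac numcase a b c d :=
  apply: (@on_num _ _ a b c d) => // x; rewrite !exprS expr0 /X /x1 /x0; splitif; lra.

Lemma cx0_11 : exists v, on [:: true; true] (@x0 R) v.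
Proof. numcase 3%N 2%N 7%N 3%N. Qed.
Lemma cx0_10 : exists v, on [:: true; false] (@x0 R) v.
Proof. numcase 2%N 2%N 6%N 3%N. Qed.
Lemma cx0_01 : exists v, on [:: false; true] (@x0 R) v.
Proof. numcase 1%N 2%N 2%N 2%N. Qed.
Lemma cx0_00 : exists v, on [:: false; false] (@x0 R) v.
Proof. numcase 0%N 2%N 0%N 1%N. Qed.
Lemma cX_111 : exists v, on [:: true; true; true] X v.
Proof. numcase 7%N 3%N 31%N 5%N. Qed.
Lemma cX_110 : exists v, on [:: true; true; false] X v.
Proof. numcase 6%N 3%N 30%N 5%N. Qed.
Lemma cX_101 : exists v, on [:: true; false; true] X v.
Proof. numcase 5%N 3%N 29%N 5%N. Qed.
Lemma cX_100 : exists v, on [:: true; false; false] X v.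
Proof. numcase 4%N 3%N 28%N 5%N. Qed.
Lemma cX_011 : exists v, on [:: false; true; true] X v.
Proof. numcase 3%N 3%N 6%N 3%N. Qed.
Lemma cX_010 : exists v, on [:: false; true; false] X v.
Proof. numcase 2%N 3%N 2%N 2%N. Qed.
Lemma cX_001 : exists v, on [:: false; false; true] X v.
Proof. numcase 1%N 3%N 1%N 2%N. Qed.
Lemma cX_000 : exists v, on [:: false; false; false] X v.
Proof. numcase 0%N 3%N 0%N 2%N. Qed.

Lemma CW_x0 : CW 2 (@x0 R).
Proof.
move=> [|p [|q [|]]] // _.
case: p q => [] []; [exact: cx0_11 | exact: cx0_10 | exact: cx0_01 | exact: cx0_00].
Qed.

Lemma CW_X : CW 3 X.
Proof.
move=> [|p [|q [|r [|]]]] // _.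
case: p q r => [] [] []; [exact: cX_111 | exact: cX_110 | exact: cX_101 | exact: cX_100
  | exact: cX_011 | exact: cX_010 | exact: cX_001 | exact: cX_000].
Qed.

Lemma on_eq u v f (a b c d : nat) : idx u = a -> size u = b -> idx v = c -> size v = d ->
  (forall x, a%:R / 2 ^+ b <= x <= a.+1%:R / 2 ^+ b ->
     f x = c%:R / 2 ^+ d + (x - a%:R / 2 ^+ b) * (2 ^+ b / 2 ^+ d)) -> on u f v.
Proof. move=> iu su iv sv h x; rewrite /I /A /lo /hi iu su iv sv; apply: h. Qed.

Ltac numon a b c d :=
  apply: (@on_eq _ _ _ a b c d) => // x; rewrite !exprS expr0 /X /x1 /x0; splitif; lra.

Lemma on_x0_00 : on [:: false; false] (@x0 R) [:: false].
Proof. numon 0%N 2%N 0%N 1%N. Qed.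
Lemma on_x0_01 : on [:: false; true] (@x0 R) [:: true; false].
Proof. numon 1%N 2%N 2%N 2%N. Qed.
Lemma on_x0_1 : on [:: true] (@x0 R) [:: true; true].
Proof. numon 1%N 1%N 3%N 2%N. Qed.
Lemma on_X_010 : on [:: false; true; false] X [:: true; false].
Proof. numon 2%N 3%N 2%N 2%N. Qed.
Lemma on_X_011 : on [:: false; true; true] X [:: true; true; false].
Proof. numon 3%N 3%N 6%N 3%N. Qed.

Lemma I_num u x (a b : nat) : idx u = a -> size u = b -> I u x = (a%:R / 2 ^+ b <= x <= a.+1%:R / 2 ^+ b).
Proof. by move=> iu su; rewrite /I /lo /hi iu su. Qed.

Lemma I_010 x : I [:: false; true; false] x -> 1/4 <= x <= 1/2.
Proof. rewrite (@I_num _ _ 2 3) // !exprS expr0 => /andP [h1 h2]; apply/andP; split; lra. Qed.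
Lemma I_011 x : I [:: false; true; true] x -> 1/4 <= x <= 1/2.
Proof. rewrite (@I_num _ _ 3 3) // !exprS expr0 => /andP [h1 h2]; apply/andP; split; lra. Qed.

Ltac ifl := rewrite /X /x1 /x0; splitif; lra.

Lemma X_low s : 0 <= s <= 1/4 -> X s = 2 * s.
Proof. move=> /andP [h1 h2]; ifl. Qed.
Lemma X_high s : 1/2 <= s <= 1 -> X s = x0 (x0 s).
Proof. move=> /andP [h1 h2]; ifl. Qed.
Lemma x0_high (s : R) : 1/2 <= s <= 1 -> x0 s = s / 2 + 1/2.
Proof. move=> /andP [h1 h2]; ifl. Qed.
Lemma x0_low (s : R) : 0 <= s <= 1/4 -> x0 s = 2 * s.
Proof. move=> /andP [h1 h2]; ifl. Qed.
Lemma X_mid x : 1/4 <= x <= 1/2 -> 1/2 <= X x <= 1.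
Proof. move=> /andP [h1 h2]; apply/andP; split; ifl. Qed.
Lemma x00 : x0 0 = 0 :> R.
Proof. ifl. Qed.
Lemma x01 : x0 1 = 1 :> R.
Proof. ifl. Qed.
Lemma X0 : X 0 = 0.
Proof. ifl. Qed.
Lemma X1 : X 1 = 1.
Proof. ifl. Qed.

Lemma pow_ge1 k : 1 <= (2:R) ^+ k.
Proof. by apply: exprn_ege1; lra. Qed.

Lemma div_le_self (w : R) k : 0 <= w -> w / 2 ^+ k <= w.
Proof. by move=> hw; rewrite ler_pdivrMr ?two_pos //; apply: ler_peMr => //; apply: pow_ge1. Qed.

Lemma div_ge0' (w : R) k : 0 <= w -> 0 <= w / 2 ^+ k.
Proof. by move=> hw; rewrite divr_ge0 // ltW // two_pos. Qed.

Lemma A_hi_form u v x : A u v x = hi v + (x - hi u) * (2 ^+ size u / 2 ^+ size v).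
Proof.
rewrite /A !hi_lo.
have := two_neq0 (size u); have := two_neq0 (size v) => h1 h2; fld.
Qed.

Lemma lo_nseq0 n : lo (nseq n false) = 0.
Proof. by rewrite /lo idx_nseq0 mul0r. Qed.
Lemma hi_nseq0 n : hi (nseq n false) = 1 / 2 ^+ n.
Proof. by rewrite hi_lo lo_nseq0 add0r size_nseq. Qed.
Lemma hi_nseq1 n : hi (nseq n true) = 1.
Proof. by rewrite /hi idx_nseq1 prednK ?expn_gt0 // size_nseq natr_pow2 divff ?two_neq0. Qed.
Lemma lo_nseq1 n : lo (nseq n true) = 1 - 1 / 2 ^+ n.
Proof. have := hi_lo (nseq n true); rewrite hi_nseq1 size_nseq => h; lra. Qed.

Lemma notin_true_lo w : true \notin w -> lo w = 0.
Proof. by move=> /nseq_of_notin ->; rewrite lo_nseq0. Qed.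
Lemma notin_false_hi w : false \notin w -> hi w = 1.
Proof. by move=> /nseq_of_notin ->; rewrite hi_nseq1. Qed.
Lemma lo0_notin w : lo w = 0 -> true \notin w.
Proof.
move=> h; apply: idx0; move: h; rewrite /lo => /eqP.
by rewrite mulf_eq0 invr_eq0 (negbTE (two_neq0 _)) orbF pnatr_eq0 => /eqP.
Qed.
Lemma hi1_notin w : hi w = 1 -> false \notin w.
Proof.
rewrite /hi => h.
have := congr1 (fun z => z * 2 ^+ size w) h; rewrite /= divfK ?two_neq0 // mul1r. rewrite -natr_pow2 => /eqP; rewrite eqr_nat => /eqP e.
by apply: idx_max; rewrite -e.
Qed.

Section Main.
Variables (g ginv x0i Xi : R -> R) (N0 Mi Mx Mxi : nat).
Hypotheses (hgN : CW N0 g) (g0 : g 0 = 0) (g1 : g 1 = 1)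
  (gP1 : forall x, in01 x -> in01 (g x) /\ ginv (g x) = x)
  (gP2 : forall z, in01 z -> in01 (ginv z) /\ g (ginv z) = z)
  (hgi : CW Mi ginv)
  (xP1 : forall x, in01 x -> in01 (x0 x) /\ x0i (x0 x) = x)
  (xP2 : forall z, in01 z -> in01 (x0i z) /\ x0 (x0i z) = z)
  (hx0i : CW Mx x0i)
  (XP1 : forall x, in01 x -> in01 (X x) /\ Xi (X x) = x)
  (XP2 : forall z, in01 z -> in01 (Xi z) /\ X (Xi z) = z)
  (hXi : CW Mxi Xi).

Definition y z := g (X (ginv z)).
Definition t z := g (Xi (ginv z)).

Lemma in01_0 : in01 0. Proof. by rewrite /in01 lexx ler01. Qed.
Lemma in01_1 : in01 1. Proof. by rewrite /in01 lexx ler01. Qed.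

Lemma ginv0 : ginv 0 = 0.
Proof. by have [_ e] := gP1 in01_0; rewrite g0 in e. Qed.
Lemma ginv1 : ginv 1 = 1.
Proof. by have [_ e] := gP1 in01_1; rewrite g1 in e. Qed.
Lemma x0i0 : x0i 0 = 0.
Proof. by have [_ e] := xP1 in01_0; rewrite x00 in e. Qed.
Lemma x0i1 : x0i 1 = 1.
Proof. by have [_ e] := xP1 in01_1; rewrite x01 in e. Qed.
Lemma Xi0 : Xi 0 = 0.
Proof. by have [_ e] := XP1 in01_0; rewrite X0 in e. Qed.
Lemma Xi1 : Xi 1 = 1.
Proof. by have [_ e] := XP1 in01_1; rewrite X1 in e. Qed.

Lemma y01 z : in01 z -> in01 (y z).
Proof. move=> hz; rewrite /y; apply: (gP1 _).1; apply: (XP1 _).1; exact: (gP2 hz).1. Qed.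

Lemma t01 z : in01 z -> in01 (t z).
Proof. move=> hz; rewrite /t; apply: (gP1 _).1; apply: (XP2 _).1; exact: (gP2 hz).1. Qed.

Lemma yg v : in01 v -> y (g v) = g (X v).
Proof. by move=> hv; rewrite /y (gP1 hv).2. Qed.

Lemma Hy : Hgens g y.
Proof. by right => x hx; apply: yg. Qed.

Lemma Hx0 : Hgens g (@x0 R).
Proof. by left. Qed.

Lemma t_inF : inF t.
Proof.
apply: (@CW_inF (Mi + Mxi + N0)%N); first exact: CW_comp (CW_comp hgi hXi) hgN.
  by rewrite /t ginv0 Xi0 g0.
by rewrite /t ginv1 Xi1 g1.
Qed.

Lemma ty z : in01 z -> t (y z) = z.
Proof.
move=> hz; rewrite /t /y.
have [h1 h2] := gP2 hz; have [h3 h4] := XP1 h1.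
by rewrite (gP1 h3).2 h4 h2.
Qed.

Lemma yt z : in01 z -> y (t z) = z.
Proof.
move=> hz; rewrite /t /y.
have [h1 h2] := gP2 hz; have [h3 h4] := XP2 h1.
by rewrite (gP1 h3).2 h4 h2.
Qed.

Lemma x0i_inF : inF x0i.
Proof. exact: CW_inF hx0i x0i0 x0i1. Qed.

Lemma hS : forall s, Hgens g s ->
  [/\ (forall x, in01 x -> in01 (s x)),
      (forall z, in01 z -> exists x, in01 x /\ s x = z) &
      exists si, gen (Hgens g) si /\ forall x, in01 x -> si (s x) = x].
Proof.
move=> s [hs|hs].
  split.
  - by move=> x hx; rewrite hs //; exact: (xP1 hx).1.
  - move=> z hz; exists (x0i z); split; first exact: (xP2 hz).1.
    by rewrite hs ?(xP2 hz).2 //; exact: (xP2 hz).1.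
  - exists x0i; split.
      apply: (gen_inv (s := s)) (gen_id _) => //; first by left.
        exact: x0i_inF.
      by move=> x hx; rewrite hs ?(xP1 hx).2.
    by move=> x hx; rewrite hs ?(xP1 hx).2.
have sy : forall z, in01 z -> s z = y z.
  move=> z hz; have [h1 h2] := gP2 hz.
  by rewrite -{1}h2 hs // /y.
split.
- by move=> x hx; rewrite sy //; exact: y01.
- by move=> z hz; exists (t z); split; [exact: t01 | rewrite sy ?yt //; exact: t01].
- exists t; split.
    apply: (gen_inv (s := s)) (gen_id _) => //; first by right.
      exact: t_inF.
    by move=> x hx; rewrite sy //; exact: ty.
  by move=> x hx; rewrite sy //; exact: ty.
Qed.

Lemma gen_x0 : gen (Hgens g) (@x0 R).
Proof. exact: gen_gen Hx0. Qed.
Lemma gen_y : gen (Hgens g) y.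
Proof. exact: gen_gen Hy. Qed.
Lemma gen_x0i : gen (Hgens g) x0i.
Proof. apply: (gen_inv (s := @x0 R)) (gen_id _) => //; [exact: Hx0 | exact: x0i_inF | by move=> x hx; rewrite (xP1 hx).2]. Qed.

Lemma gen_iter k n : gen (Hgens g) k -> gen (Hgens g) (iter n k).
Proof.
move=> gk; elim: n => [|n IH]; first exact: gen_id.
exact: gen_comp IH gk.
Qed.


Lemma x0_01' x : in01 x -> in01 (x0 x).
Proof. by move=> hx; exact: (xP1 hx).1. Qed.

Lemma x0i_half w : 0 <= w <= 1/2 -> x0i w = w / 2.
Proof.
move=> /andP [h1 h2].
have e : x0 (w / 2) = w by rewrite x0_low; [rewrite mulrC divfK //; lra | apply/andP; split; lra].
rewrite -{1}e (xP1 _).2 //; rewrite /in01; apply/andP; split; lra.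
Qed.

Lemma iter_x0i k w : 0 <= w <= 1/2 -> iter k x0i w = w / 2 ^+ k.
Proof.
move=> /andP [h1 h2]; elim: k => [|k IH]; first by rewrite expr0 divr1.
rewrite iterS IH x0i_half; last first.
  apply/andP; split; first exact: div_ge0'.
  exact: le_trans (div_le_self _ h1) h2.
by rewrite exprS; have := two_neq0 k => h; fld.
Qed.

Lemma iter_x0 k r : 1/2 <= r <= 1 -> iter k (@x0 R) r = 1 - (1 - r) / 2 ^+ k.
Proof.
move=> /andP [h1 h2]; elim: k => [|k IH]; first by rewrite expr0 divr1 /=; ring.
have a1 : 0 <= (1 - r) / 2 ^+ k by apply: div_ge0'; lra.
have a2 : (1 - r) / 2 ^+ k <= 1 - r by apply: div_le_self; lra.
rewrite iterS IH x0_high; last by apply/andP; split; lra.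
by rewrite exprS; have := two_neq0 k => h; fld.
Qed.

Lemma iter_x0_01 k r : in01 r -> in01 (iter k (@x0 R) r).
Proof. by move=> hr; elim: k => [//|k IH]; rewrite iterS; apply: x0_01'. Qed.

Lemma iter_cancel k r : in01 r -> iter k x0i (iter k (@x0 R) r) = r.
Proof.
move=> hr; elim: k => [//|k IH].
by rewrite iterSr iterS (xP1 (iter_x0_01 k hr)).2.
Qed.

Lemma K1 n s : 0 <= s -> s * 2 ^+ n <= 1/2 -> g (s * 2 ^+ n) = iter n y (g s).
Proof.
move=> hs; elim: n => [|n IH]; first by rewrite expr0 mulr1.
have p0 : 0 <= s * 2 ^+ n by rewrite mulr_ge0 // ltW // two_pos.
rewrite exprS mulrCA => h.
have e : X (s * 2 ^+ n) = 2 * (s * 2 ^+ n) by rewrite X_low //; apply/andP; split; lra.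
rewrite -e -yg ?IH //; first lra.
by rewrite /in01; apply/andP; split; lra.
Qed.

Lemma G0 : exists n k : nat, forall x, 0 <= x <= 1/2 -> g x = iter n y (iter k x0i x).
Proof.
have su0 : size (nseq N0 false) = N0 by rewrite size_nseq.
have [v0 h0] := hgN su0.
set m0 := size v0.
have lv0 : lo v0 = 0.
  by rewrite -(A_lo (nseq N0 false) v0) -h0 ?I_lo // lo_nseq0 g0.
have gl0 : forall s, 0 <= s <= 1 / 2 ^+ N0 -> g s = s * (2 ^+ N0 / 2 ^+ m0).
  move=> s hs; rewrite h0; last by rewrite /I lo_nseq0 hi_nseq0.
  by rewrite /A lv0 lo_nseq0 su0 add0r subr0.
exists (N0 + m0)%N, (m0 + m0)%N => x /andP [hx1 hx2].
set s := x / 2 ^+ (N0 + m0).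
have hs : s * 2 ^+ (N0 + m0) = x by rewrite /s divfK ?two_neq0.
have s0 : 0 <= s by apply: div_ge0'.
rewrite -{1}hs K1 //; last by rewrite hs.
rewrite gl0; last first.
  apply/andP; split => //.
  have e1 : s = (x / 2 ^+ m0) / 2 ^+ N0.
    by rewrite /s exprD; have := two_neq0 N0; have := two_neq0 m0 => h1 h2; fld.
  rewrite e1 ler_pM2r ?invr_gt0 ?two_pos //.
  apply: le_trans (div_le_self _ hx1) _; lra.
congr iter; rewrite iter_x0i ?hx1 ?hx2 // /s !exprD.
have := two_neq0 N0; have := two_neq0 m0 => h1 h2; fld.
Qed.


Lemma K2 n r : 1/2 <= r <= 1 -> g (iter (n + n) (@x0 R) r) = iter n y (g r).
Proof.
move=> hr; have [r1 r2] := andP hr; elim: n => [//|n IH].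
rewrite addSn addnS !iterS.
have hv : 1/2 <= iter (n + n) (@x0 R) r <= 1.
  rewrite iter_x0 //.
  have a1 : 0 <= (1 - r) / 2 ^+ (n + n) by apply: div_ge0'; lra.
  have a2 : (1 - r) / 2 ^+ (n + n) <= 1 - r by apply: div_le_self; lra.
  apply/andP; split; lra.
have hv01 : in01 (iter (n + n) (@x0 R) r) by case/andP: hv => a b; apply/andP; split; lra.
by rewrite -X_high // -yg // IH.
Qed.

Lemma G1 : exists P : nat, forall r, 1/2 <= r <= 1 -> iter N0 y (g r) = iter P (@x0 R) r.
Proof.
have su1 : size (nseq N0 true) = N0 by rewrite size_nseq.
have [v1 h1] := hgN su1.
set m1 := size v1.
have hv1 : hi v1 = 1.
  by rewrite -(A_hi (nseq N0 true) v1) -h1 ?I_hi // hi_nseq1 g1.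
have gh : forall s, 1 - 1 / 2 ^+ N0 <= s <= 1 -> g s = 1 + (s - 1) * (2 ^+ N0 / 2 ^+ m1).
  move=> s hs; rewrite h1; last by rewrite /I lo_nseq1 hi_nseq1.
  by rewrite A_hi_form hv1 hi_nseq1 su1.
exists (N0 + m1)%N => r hr.
have [r1 r2] := andP hr.
rewrite -K2 // iter_x0 // gh; last first.
  have e1 : (1 - r) / 2 ^+ (N0 + N0) = ((1 - r) / 2 ^+ N0) / 2 ^+ N0.
    by rewrite exprD; have := two_neq0 N0 => h; fld.
  have a1 : 0 <= (1 - r) / 2 ^+ (N0 + N0) by apply: div_ge0'; lra.
  have a2 : (1 - r) / 2 ^+ N0 <= 1 by apply: le_trans (div_le_self _ _) _; lra.
  have a3 : (1 - r) / 2 ^+ (N0 + N0) <= 1 / 2 ^+ N0.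
    by rewrite e1 ler_pM2r ?invr_gt0 ?two_pos.
  apply/andP; split; lra.
rewrite iter_x0 // !exprD.
have := two_neq0 N0; have := two_neq0 m1 => h2 h3; fld.
Qed.

Lemma mid : exists W, gen (Hgens g) W /\ forall x, 1/4 <= x <= 1/2 -> W x = X x.
Proof.
have [n [k hG0]] := G0.
have [P hG1] := G1.
exists (fun x => iter P x0i (iter N0 y (y (iter n y (iter k x0i x))))); split.
  apply: gen_comp (gen_iter P gen_x0i).
  apply: gen_comp (gen_iter N0 gen_y).
  apply: gen_comp gen_y.
  apply: gen_comp (gen_iter n gen_y).
  exact: gen_iter k gen_x0i.
move=> x hx; have [a b] := andP hx.
have hx01 : in01 x by apply/andP; split; lra.
have hX := X_mid hx.
have hX01 : in01 (X x) by case/andP: hX => c d; apply/andP; split; lra.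
rewrite -hG0; last by apply/andP; split; lra.
by rewrite yg // hG1 // iter_cancel.
Qed.

Lemma bases : [/\ Q (Hgens g) [:: false; false] [:: false], Q (Hgens g) [:: false; true] [:: true; false],
   Q (Hgens g) [:: true] [:: true; true], Q (Hgens g) [:: false; true; false] [:: true; false] &
   Q (Hgens g) [:: false; true; true] [:: true; true; false]].
Proof.
have [W [gW eW]] := mid.
split; apply: Real_Q.
- by exists (@x0 R); split; [exact: gen_x0 | exact: on_x0_00].
- by exists (@x0 R); split; [exact: gen_x0 | exact: on_x0_01].
- by exists (@x0 R); split; [exact: gen_x0 | exact: on_x0_1].
- exists W; split => // x hx; rewrite eW; [exact: on_X_010 | exact: I_010].
- exists W; split => // x hx; rewrite eW; [exact: on_X_011 | exact: I_011].
Qed.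

Lemma classify N f u v : (0 < N)%N -> size u = N -> on u f v -> f 0 = 0 -> f 1 = 1 ->
  (forall x z, in01 x -> in01 z -> f x = f z -> x = z) -> Q (Hgens g) u v.
Proof.
move=> Np su hv f0 f1 inj.
have [b00 b01 b1 bX1 bX2] := bases.
have hS' := hS.
have fl : f (lo u) = lo v by rewrite hv ?I_lo // A_lo.
have fh : f (hi u) = hi v by rewrite hv ?I_hi // A_hi.
have lu01 := I_in01 (I_lo u); have hu01 := I_in01 (I_hi u).
have int := interior hS' b00 b01 b1 bX1 bX2.
have tvP : true \in u -> true \in v.
  move=> tu; apply/negPn/negP => /notin_true_lo lv0.
  have e : lo u = 0 by apply: inj lu01 in01_0 _; rewrite fl lv0 f0.
  by move: (lo0_notin e); rewrite tu.
have fvP : false \in u -> false \in v.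
  move=> fu; apply/negPn/negP => /notin_false_hi hv1.
  have e : hi u = 1 by apply: inj hu01 in01_1 _; rewrite fh hv1 f1.
  by move: (hi1_notin e); rewrite fu.
case: (boolP (true \in u)) => tu; case: (boolP (false \in u)) => fu.
- exact: Q_trans (int u tu fu) (Q_sym hS' (int v (tvP tu) (fvP fu))).
- have eu := nseq_of_notin fu.
  have fv : false \notin v.
    by apply: hi1_notin; rewrite -fh notin_false_hi.
  have ev := nseq_of_notin fv.
  case: (size v) ev => [|mv] ev.
    by move: (tvP tu); rewrite ev.
  case: (size u) eu => [|mu] eu; first by move: tu; rewrite eu.
  rewrite eu ev; exact: Q_trans (ones hS' b1 mu) (Q_sym hS' (ones hS' b1 mv)).
- have eu := nseq_of_notin tu.
  have tv : true \notin v.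
    by apply: lo0_notin; rewrite -fl notin_true_lo.
  have ev := nseq_of_notin tv.
  case: (size v) ev => [|mv] ev.
    by move: (fvP fu); rewrite ev.
  case: (size u) eu => [|mu] eu; first by move: fu; rewrite eu.
  rewrite eu ev; exact: Q_trans (zeros b00 mu) (Q_sym hS' (zeros b00 mv)).
- have eu := nseq_of_notin tu; move: fu; rewrite eu su.
  by case: (N) Np => // n _; rewrite /= inE eqxx.
Qed.

Lemma main_f f : inF f -> Cl (gen (Hgens g)) f.
Proof.
move=> hf; have [f0 [f1 _]] := hf.
have [N1 hN1] := inF_CW hf.
have hN := CW_mono (d := 1) hN1.
have [fi [fP1 _ _]] := CW_inv hN f0 f1.
have inj : forall x z, in01 x -> in01 z -> f x = f z -> x = z.
  by move=> x z hx hz e; rewrite -(fP1 x hx).2 e (fP1 z hz).2.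
have [D hD] : exists D, forall u, size u = (N1 + 1)%N -> exists m, (m <= D)%N /\
    exists v, on u f v /\ forall w, (m <= size w)%N -> Real (Hgens g) (u ++ w) (v ++ w).
  apply: (words_bound (P := fun u m => exists v, on u f v /\
     forall w, (m <= size w)%N -> Real (Hgens g) (u ++ w) (v ++ w))) => u su.
  have [v hv] := hN u su.
  have Np : (0 < N1 + 1)%N by rewrite addn1.
  have [m hm] := classify Np su hv f0 f1 inj.
  by exists m, v.
split => //.
exists (gl (N1 + 1 + D)); split; first exact: gl_subdiv.
move=> a b /gl_pieces [i [hi0 -> ->]].
have [u' [su' iu']] := word_ex hi0.
have sN : size (take (N1 + 1) u') = (N1 + 1)%N by rewrite size_takel // su' leq_addr.
have [m [mD [v [hv hr]]]] := hD _ sN.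
have sw : (m <= size (drop (N1 + 1) u'))%N by rewrite size_drop su' addKn.
have [h [gh eh]] := hr _ sw.
exists h; split => // x hx.
have hxu : I u' x by rewrite /I /lo /hi su' iu'; exact: hx.
rewrite -(cat_take_drop (N1 + 1) u') in hxu.
rewrite hv; last exact: I_cat hxu.
by rewrite -(A_cat _ _ (drop (N1 + 1) u')) -eh.
Qed.

End Main.

Lemma main_all (g : R -> R) : inF g -> forall f : R -> R, Cl (gen (Hgens g)) f <-> inF f.
Proof.
move=> hg f; split; first by case.
have [g0 [g1 _]] := hg.
have [N0 hgN] := inF_CW hg.
have [ginv [gP1 gP2 [Mi hgi]]] := CW_inv hgN g0 g1.
have [x0i [xP1 xP2 [Mx hx0i]]] := CW_inv CW_x0 x00 x01.
have [Xi [XP1 XP2 [Mxi hXi]]] := CW_inv CW_X X0 X1.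
by apply: main_f; eassumption.
Qed.

End Reals.

Theorem lemma3p2 (R : realType) (g : R -> R) :
  inF g -> forall f : R -> R, Cl (gen (Hgens g)) f <-> inF f.
Proof. exact: main_all. Qed.
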